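(* Let $G$ be an $(n,n,p_s,p_d)$-two-island network with groups $V_1,V_2$, and let the implicit opinions $x_i(t)$ and explicit opinions $y_i(t)$ evolve according to the dual opinions dynamics described in the context, with common bias parameter $b>0$, common resilience $\phi\in(0,1)$, and the symmetric initial condition $x_i(0)=x_0\in(\tfrac12,1)$, $y_i(0)=y_0\in[\tfrac12,x_0]$ for $i\in V_1$ and $x_j(0)=1-x_0$, $y_j(0)=1-y_0$ for $j\in V_2$. Then for any two individuals $i,j$ in the same group, $x_i(t)=x_j(t)$ and $y_i(t)=y_j(t)$ for all $t\ge 0$. Moreover, for $i\in V_1$ and $j\in V_2$ and every $t>0$: $x_i(t)+x_j(t)=y_i(t)+y_j(t)=1$, $x_i(t)>y_i(t)>\tfrac12$, and $x_j(t)<y_j(t)<\tfrac12$.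
   Context: Let $n\ge 1$ and $p_s,p_d\in(0,1)$ with $p_s>p_d$ and $np_s,np_d$ positive integers. An $(n,n,p_s,p_d)$-two-island network is an undirected graph (no self-loops) with vertex set $V=V_1\cup V_2$, $V_1\cap V_2=\emptyset$, $|V_1|=|V_2|=n$, such that each node of $V_1$ has exactly $np_s$ neighbours in $V_1$ and $np_d$ neighbours in $V_2$, and each node of $V_2$ has exactly $np_s$ neighbours in $V_2$ and $np_d$ neighbours in $V_1$. Its degree of homophily is $h_G=p_s/p_d>1$. Let $w_{ij}\in\{0,1\}$ be the adjacency matrix, $N_i$ the set of neighbours of $i$, and $d_i=\sum_{j\in N_i}w_{ij}$. Dual opinions dynamics: each individual $i\in V$ has an implicit opinion $x_i(t)\in[0,1]$ and an explicit opinion $y_i(t)\in[0,1]$, $t=0,1,2,\dots$, updated by $$x_i(t+1)=\frac{x_i(t)^{b}s_i(t)}{x_i(t)^{b}s_i(t)+(1-x_i(t))^{b}(d_i-s_i(t))},\qquad y_i(t+1)=\phi\, x_i(t+1)+(1-\phi)\hat y_{i,avg}(t),$$ where $s_i(t)=\sum_{j\in N_i}w_{ij}y_j(t)$ and $\hat y_{i,avg}(t)=\sum_{j\in N_i}\frac{w_{ij}}{d_i}y_j(t)$. *)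

(* Defs.v *)
From HB Require Import structures.
From mathcomp Require Import all_boot all_order all_algebra.
From mathcomp Require Import reals exp.
Set Implicit Arguments. Unset Strict Implicit. Unset Printing Implicit Defensive.
Import Order.TTheory GRing.Theory Num.Theory.
Local Open Scope ring_scope.

(* An undirected graph without self-loops on a finite vertex type V is a
   symmetric irreflexive relation e; w_ij = 1 iff e i j. *)

(* (n,n,p_s,p_d)-two-island network, with ks = n p_s and kd = n p_d. *)
Definition two_island (V : finType) (e : rel V) (V1 V2 : {set V})
    (n ks kd : nat) : Prop :=
  symmetric e /\ irreflexive e /\
  [disjoint V1 & V2] /\ V1 :|: V2 = [set: V] /\
  #|V1| = n /\ #|V2| = n /\
  (forall i, i \in V1 ->
     #|[set j in V1 | e i j]| = ks /\ #|[set j in V2 | e i j]| = kd) /\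
  (forall i, i \in V2 ->
     #|[set j in V2 | e i j]| = ks /\ #|[set j in V1 | e i j]| = kd).

Definition deg {R : realType} (V : finType) (e : rel V) (i : V) : R :=
  \sum_(j | e i j) 1.

Definition nbsum {R : realType} (V : finType) (e : rel V) (y : V -> R) (i : V) : R :=
  \sum_(j | e i j) y j.

Definition nbavg {R : realType} (V : finType) (e : rel V) (y : V -> R) (i : V) : R :=
  \sum_(j | e i j) (1 / deg e i) * y j.

Definition dual_dynamics {R : realType} (V : finType) (e : rel V) (b phi : R)
    (x y : nat -> V -> R) : Prop :=
  forall (t : nat) (i : V),
    x t.+1 i =
      (x t i `^ b * nbsum e (y t) i) /
      (x t i `^ b * nbsum e (y t) i + (1 - x t i) `^ b * (deg e i - nbsum e (y t) i))
    /\ y t.+1 i = phi * x t.+1 i + (1 - phi) * nbavg e (y t) i.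

(* Main.v *)
Require Import Defs.
From HB Require Import structures.
From mathcomp Require Import all_boot all_order all_algebra.
From mathcomp Require Import reals exp.
From mathcomp Require Import ring lra.
Import Order.TTheory GRing.Theory Num.Theory.
Local Open Scope ring_scope.

Lemma sum_split (R : realType) (V : finType) (e : rel V) (V1 V2 : {set V})
  (f : V -> R) (i : V) (c1 c2 : R) :
  [disjoint V1 & V2] -> V1 :|: V2 = [set: V] ->
  (forall j, j \in V1 -> f j = c1) -> (forall j, j \in V2 -> f j = c2) ->
  \sum_(j | e i j) f j =
  c1 * #|[set j in V1 | e i j]|%:R + c2 * #|[set j in V2 | e i j]|%:R.
Proof.
move=> hdis hcov h1 h2.
have hV : forall j, j \in V1 :|: V2 by move=> j; rewrite hcov inE.
rewrite (bigID (mem V1)) /=.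
have -> : \sum_(j | e i j && (j \in V1)) f j = \sum_(j in [set j in V1 | e i j]) c1.
  apply: eq_big => j; first by rewrite inE andbC.
  by case/andP => _ /h1.
have -> : \sum_(j | e i j && (j \notin V1)) f j = \sum_(j in [set j in V2 | e i j]) c2.
  apply: eq_big => j.
    rewrite inE andbC.
    have := hV j; rewrite inE; case/orP => hj.
      by rewrite hj (disjointFr hdis hj).
    by rewrite hj (disjointFl hdis hj).
  case/andP => _ hj; apply: h2.
  by have := hV j; rewrite inE (negbTE hj).
by rewrite !sumr_const !mulr_natr.
Qed.

Lemma step_ineq (R : realFieldType) (A B k1 k2 phi c s d : R) :
  0 < B -> B < A -> 0 < k2 -> k2 < k1 -> 0 < phi -> phi < 1 ->
  1/2 <= c -> c < 1 -> s = k1*c + k2*(1-c) -> d = k1 + k2 ->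
  1/2 < A*s/(A*s + B*(d-s)) /\ A*s/(A*s + B*(d-s)) < 1 /\
  1/2 < phi * (A*s/(A*s + B*(d-s))) + (1-phi)*(1/d*s) /\
  phi * (A*s/(A*s + B*(d-s))) + (1-phi)*(1/d*s) < A*s/(A*s + B*(d-s)).
Proof.
move=> hB hAB hk2 hk12 hp0 hp1 hc0 hc1 hs hd.
have s0 : 0 < s by rewrite hs; nra.
have ds0 : 0 < d - s by rewrite hs hd; nra.
have sds : 0 <= s - (d - s) by rewrite hs hd; nra.
have d0 : 0 < d by lra.
set D := A*s + B*(d-s).
have D0 : 0 < D by rewrite /D; nra.
have Dn : D != 0 by rewrite gt_eqF.
have dn : d != 0 by rewrite gt_eqF.
have e1 : A*s/D - 1/2 = ((A-B)*s + B*(s-(d-s))) / (2*D) by rewrite /D; field; rewrite -/D; repeat split; rewrite ?mulf_neq0 // ?pnatr_eq0 ?(gt_eqF D0) ?(gt_eqF d0) ?oner_eq0.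
have e2 : 1 - A*s/D = B*(d-s)/D by rewrite /D; field.
have e3 : A*s/D - 1/d*s = s*(d-s)*(A-B)/(D*d) by rewrite /D; field; rewrite -/D; repeat split; rewrite ?mulf_neq0 // ?pnatr_eq0 ?(gt_eqF D0) ?(gt_eqF d0) ?oner_eq0.
have e4 : 1/d*s - 1/2 = (s-(d-s))/(2*d) by field.
have h1 : 0 < ((A-B)*s + B*(s-(d-s))) / (2*D).
  apply: divr_gt0; last lra.
  have : 0 < (A-B)*s by apply: mulr_gt0; lra.
  have : 0 <= B*(s-(d-s)) by apply: mulr_ge0; lra.
  lra.
have h2 : 0 < B*(d-s)/D by apply: divr_gt0 => //; apply: mulr_gt0.
have h3 : 0 < s*(d-s)*(A-B)/(D*d).
  apply: divr_gt0; last by apply: mulr_gt0.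
  by apply: mulr_gt0; [apply: mulr_gt0|lra].
have h4 : 0 <= (s-(d-s))/(2*d) by apply: divr_ge0 => //; lra.
have h5 : 0 < phi * (A*s/D - 1/2) by apply: mulr_gt0; lra.
have h6 : 0 <= (1-phi) * (1/d*s - 1/2) by apply: mulr_ge0; lra.
have h7 : 0 < (1-phi) * (A*s/D - 1/d*s) by apply: mulr_gt0; lra.
split; first lra. split; first lra. split; lra.
Qed.

Theorem theorem1 (R : realType) (V : finType) (e : rel V) (V1 V2 : {set V})
    (n ks kd : nat) (ps pd : R)
    (hn : (1 <= n)%N)
    (hpd0 : 0 < pd) (hpdps : pd < ps) (hps1 : ps < 1)
    (hks : n%:R * ps = ks%:R) (hkd : n%:R * pd = kd%:R)
    (hks0 : (0 < ks)%N) (hkd0 : (0 < kd)%N)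
    (hG : two_island e V1 V2 n ks kd)
    (b phi : R) (hb : 0 < b) (hphi0 : 0 < phi) (hphi1 : phi < 1)
    (x0 y0 : R) (hx0l : 1 / 2 < x0) (hx0r : x0 < 1)
    (hy0l : 1 / 2 <= y0) (hy0r : y0 <= x0)
    (x y : nat -> V -> R)
    (hinit1 : forall i, i \in V1 -> x 0%N i = x0 /\ y 0%N i = y0)
    (hinit2 : forall j, j \in V2 -> x 0%N j = 1 - x0 /\ y 0%N j = 1 - y0)
    (hdyn : dual_dynamics e b phi x y) :
  (forall (t : nat) (i j : V),
      (i \in V1 /\ j \in V1) \/ (i \in V2 /\ j \in V2) ->
      x t i = x t j /\ y t i = y t j) /\
  (forall (t : nat) (i j : V), (0 < t)%N -> i \in V1 -> j \in V2 ->
      x t i + x t j = 1 /\ y t i + y t j = 1 /\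
      y t i < x t i /\ 1 / 2 < y t i /\
      x t j < y t j /\ y t j < 1 / 2).
Proof.
case: hG => _ [_ [hdis [hcov [_ [_ [hc1 hc2]]]]]].
set k1 : R := ks%:R. set k2 : R := kd%:R.
have hk2 : 0 < k2 by rewrite /k2 ltr0n.
have hn1 : 1 <= (n%:R : R) by rewrite ler1n.
have hk12 : k2 < k1 by rewrite /k1 /k2 -hks -hkd; nra.
have inv : forall t, exists a c : R, (1/2 < a /\ a < 1 /\ 1/2 <= c /\ c <= a /\
   ((0 < t)%N -> c < a /\ 1/2 < c)) /\
   (forall i, i \in V1 -> x t i = a /\ y t i = c) /\
   (forall j, j \in V2 -> x t j = 1 - a /\ y t j = 1 - c).
  elim=> [|t [a [c [[ha1 [ha2 [hc1' [hc2' _]]]] [hV1 hV2]]]]].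
    exists x0, y0; split; [split; [lra|split;[lra|split;[lra|split;[lra|by []]]]] | by split].
  set s := k1 * c + k2 * (1 - c). set d := k1 + k2.
  have hyc1 : forall j, j \in V1 -> y t j = c by move=> j /hV1 [].
  have hyc2 : forall j, j \in V2 -> y t j = 1 - c by move=> j /hV2 [].
  have deg1 : forall i, i \in V1 -> deg e i = d.
    move=> i hi; rewrite /deg (@sum_split R V e V1 V2 _ i 1 1) //.
    by case: (hc1 i hi) => -> ->; rewrite /d !mul1r.
  have deg2 : forall i, i \in V2 -> deg e i = d.
    move=> i hi; rewrite /deg (@sum_split R V e V1 V2 _ i 1 1) //.
    by case: (hc2 i hi) => -> ->; rewrite /d !mul1r addrC.
  have ns1 : forall i, i \in V1 -> nbsum e (y t) i = s.
    move=> i hi; rewrite /nbsum (@sum_split R V e V1 V2 _ i c (1 - c)) //.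
    by case: (hc1 i hi) => -> ->; rewrite /s -/k1 -/k2; ring.
  have ns2 : forall i, i \in V2 -> nbsum e (y t) i = d - s.
    move=> i hi; rewrite /nbsum (@sum_split R V e V1 V2 _ i c (1 - c)) //.
    by case: (hc2 i hi) => -> ->; rewrite /s /d -/k1 -/k2; ring.
  have avg : forall i, nbavg e (y t) i = 1 / deg e i * nbsum e (y t) i.
    by move=> i; rewrite /nbavg /nbsum mulr_sumr.
  set A := a `^ b. set B := (1 - a) `^ b.
  have hB : 0 < B by apply: powR_gt0; lra.
  have hAB : B < A.
    apply: gt0_ltr_powR => //; rewrite ?nnegrE; lra.
  have [i1 [i2 [i3 i4]]] := @step_ineq R A B k1 k2 phi c s d hB hAB hk2 hk12 hphi0 hphi1
     hc1' ltac:(lra) erefl erefl.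
  have s0 : 0 < s by rewrite /s; nra.
  have ds0 : 0 < d - s by rewrite /s /d; nra.
  have d0 : 0 < d by lra.
  have D0 : 0 < A*s + B*(d-s) by nra.
  exists (A*s/(A*s + B*(d-s))), (phi * (A*s/(A*s + B*(d-s))) + (1-phi)*(1/d*s)).
  split; first by do !split => //; lra.
  split.
  - move=> i hi; have [hx hy] := hdyn t i.
    have Ex : x t.+1 i = A*s/(A*s + B*(d-s)).
      by rewrite hx (ns1 i hi) (deg1 i hi); case: (hV1 i hi) => -> _.
    by rewrite hy Ex avg (ns1 i hi) (deg1 i hi).
  - move=> i hi; have [hx hy] := hdyn t i.
    have Ex : x t.+1 i = 1 - A*s/(A*s + B*(d-s)).
      rewrite hx (ns2 i hi) (deg2 i hi); case: (hV2 i hi) => -> _.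
      have -> : 1 - (1 - a) = a by ring.
      have -> : d - (d - s) = s by ring.
      rewrite -/A -/B. field.
      by rewrite (gt_eqF D0).
    split => //.
    rewrite hy Ex avg (ns2 i hi) (deg2 i hi). field.
    by rewrite (gt_eqF d0) (gt_eqF D0).
split.
- move=> t i j; have [a [c [_ [hV1 hV2]]]] := inv t; case=> [[hi hj]|[hi hj]].
    by case: (hV1 i hi) => -> ->; case: (hV1 j hj) => -> ->.
  by case: (hV2 i hi) => -> ->; case: (hV2 j hj) => -> ->.
- move=> t i j ht hi hj.
  have [a [c [[h1 [h2 [h3 [h4 h5]]]] [hV1 hV2]]]] := inv t.
  have [h6 h7] := h5 ht.
  case: (hV1 i hi) => -> ->; case: (hV2 j hj) => -> ->.
  repeat split; lra.
Qed.
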